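(* Let $\mathcal H$ be a complex Hilbert space and let $\mathbf A=(A_1,\dots,A_m)$ be an $m$-tuple of bounded self-adjoint operators on $\mathcal H$. If $\Lambda_{\hat k}(\mathbf A)\neq\emptyset$ for some integer $\hat k>(m+1)/2$, then $\Lambda_1(\mathbf A)$ is star-shaped and contains $\operatorname{conv}\Lambda_{\hat k}(\mathbf A)$, and every element of $\operatorname{conv}\Lambda_{\hat k}(\mathbf A)$ is a star center of $\Lambda_1(\mathbf A)$.
   Context: For an $m$-tuple $\mathbf A=(A_1,\dots,A_m)$ of bounded self-adjoint operators on a complex Hilbert space $\mathcal H$ and a positive integer $k$, $\Lambda_k(\mathbf A)=\{(a_1,\dots,a_m)\in\mathbb R^m:$ there is an orthogonal projection $P$ of rank $k$ on $\mathcal H$ with $PA_jP=a_jP$ for $j=1,\dots,m\}$; $\Lambda_1(\mathbf A)=\{(\langle A_1x,x\rangle,\dots,\langle A_mx,x\rangle):\|x\|=1\}$ is the joint numerical range. A set $S\subseteq\mathbb R^m$ is star-shaped with star center $\mathbf c\in S$ if for every $\mathbf b\in S$ the segment joining $\mathbf c$ and $\mathbf b$ lies in $S$. $\operatorname{conv}$ denotes convex hull. *)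

(* Defs.v *)
From HB Require Import structures.
From mathcomp Require Import all_boot all_order all_algebra.
From mathcomp Require Import complex.
From mathcomp Require Import reals.
Set Implicit Arguments. Unset Strict Implicit. Unset Printing Implicit Defensive.
Import Order.TTheory GRing.Theory Num.Theory.
Local Open Scope ring_scope.

Section Hilbert.
Variables (R : realType) (V : lmodType R[i]) (ip : V -> V -> R[i]).

Definition inner_product : Prop :=
  [/\ forall (a : R[i]) (x y z : V), ip (a *: x + y) z = a * ip x z + ip y z,
      forall x y : V, ip y x = (ip x y)^*,
      forall x : V, 0 <= ip x x &
      forall x : V, ip x x = 0 -> x = 0].

Definition hnorm (x : V) : R := Num.sqrt (complex.Re (ip x x)).

Definition complete_ip : Prop :=
  forall u : nat -> V,
    (forall e : R, 0 < e -> exists N, forall p q, (N <= p)%N -> (N <= q)%N ->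
        hnorm (u p - u q) < e) ->
    exists x : V, forall e : R, 0 < e -> exists N, forall p, (N <= p)%N ->
        hnorm (u p - x) < e.

Definition hilbert_space : Prop := inner_product /\ complete_ip.

Definition is_linear (T : V -> V) : Prop :=
  forall (a : R[i]) (x y : V), T (a *: x + y) = a *: T x + T y.

Definition bounded_op (T : V -> V) : Prop :=
  is_linear T /\ exists M : R, forall x, hnorm (T x) <= M * hnorm x.

Definition self_adjoint (T : V -> V) : Prop :=
  forall x y, ip (T x) y = ip x (T y).

Definition orth_proj_rank (k : nat) (P : V -> V) : Prop :=
  [/\ is_linear P, forall x, P (P x) = P x, self_adjoint P &
      exists e : 'I_k -> V,
        (forall c : 'I_k -> R[i], \sum_(i < k) c i *: e i = 0 -> forall i, c i = 0) /\
        (forall y, (exists x, P x = y) <->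
                   exists c : 'I_k -> R[i], y = \sum_(i < k) c i *: e i)].

Definition Lambda (m : nat) (A : 'I_m -> V -> V) (k : nat) : 'rV[R]_m -> Prop :=
  fun a => exists P : V -> V, orth_proj_rank k P /\
    forall (j : 'I_m) (x : V), P (A j (P x)) = ((a 0 j)%:C)%C *: P x.

End Hilbert.

Definition conv (R : realType) (m : nat) (S : 'rV[R]_m -> Prop) : 'rV[R]_m -> Prop :=
  fun x => exists n (w : 'I_n -> R) (p : 'I_n -> 'rV[R]_m),
    [/\ forall i, 0 <= w i, \sum_(i < n) w i = 1, forall i, S (p i) &
        x = \sum_(i < n) w i *: p i].

Definition star_center (R : realType) (m : nat) (S : 'rV[R]_m -> Prop) (c : 'rV[R]_m) : Prop :=
  S c /\ forall b, S b -> forall t : R, 0 <= t <= 1 -> S ((1 - t) *: c + t *: b).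

Definition star_shaped (R : realType) (m : nat) (S : 'rV[R]_m -> Prop) : Prop :=
  exists c, star_center S c.

(* Main.v *)
Require Import Defs.
From HB Require Import structures.
From mathcomp Require Import all_boot all_order all_algebra.
From mathcomp Require Import complex.
From mathcomp Require Import reals.
From mathcomp Require Import ring lra zify.
Import Order.TTheory GRing.Theory Num.Theory.
Local Open Scope ring_scope.

Section Aux.
Variables (R : realType) (V : lmodType R[i]) (ip : V -> V -> R[i]).
Hypothesis hip : inner_product ip.

Lemma ipDZ a x y z : ip (a *: x + y) z = a * ip x z + ip y z.
Proof. by case: hip => h. Qed.
Lemma ipC x y : ip y x = (ip x y)^*%C.
Proof. by case: hip => _ h. Qed.
Lemma ip_ge0 x : 0 <= ip x x.
Proof. by case: hip => _ _ h. Qed.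
Lemma ip_def x : ip x x = 0 -> x = 0.
Proof. by case: hip => _ _ _; apply. Qed.

Lemma dbl0 (M : zmodType) (a : M) : a = a + a -> a = 0.
Proof. by move=> h; apply: (@addrI _ a); rewrite addr0 -h. Qed.

Lemma ip0l z : ip 0 z = 0.
Proof.
by apply: dbl0; have := ipDZ 1 0 0 z; rewrite scaler0 addr0 mul1r.
Qed.
Lemma ipDl x y z : ip (x + y) z = ip x z + ip y z.
Proof. by have := ipDZ 1 x y z; rewrite scale1r mul1r. Qed.
Lemma ipZl a x z : ip (a *: x) z = a * ip x z.
Proof. by have := ipDZ a x 0 z; rewrite addr0 ip0l addr0. Qed.
Lemma ipDr x y z : ip z (x + y) = ip z x + ip z y.
Proof. by rewrite (ipC x z) (ipC y z) [LHS]ipC ipDl raddfD. Qed.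
Lemma ipZr a x z : ip z (a *: x) = a^*%C * ip z x.
Proof. by rewrite (ipC x z) [LHS]ipC ipZl rmorphM. Qed.
Lemma ip0r z : ip z 0 = 0.
Proof. by rewrite ipC ip0l conjc0. Qed.

Lemma ip_suml (I : finType) (c : I -> R[i]) (e : I -> V) w :
  ip (\sum_i c i *: e i) w = \sum_i c i * ip (e i) w.
Proof.
elim/big_rec2: _ => [|i y1 y2 _ h]; first by rewrite ip0l.
by rewrite ipDl ipZl h.
Qed.

Lemma ip_real x : ip x x = ((complex.Re (ip x x))%:C)%C.
Proof.
have h := ip_ge0 x; have hI := ger0_Im h.
by case: (ip x x) hI => a b /= ->.
Qed.

Lemma ip_pos x : x != 0 -> 0 < complex.Re (ip x x).
Proof.
move=> hx; have h := ip_ge0 x.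
have hne : ip x x != 0 by apply/eqP => /ip_def /eqP; rewrite (negbTE hx).
have : 0 < ip x x by rewrite lt_def hne h.
by rewrite ltcE => /andP [_].
Qed.

Lemma lin0 (T : V -> V) : is_linear T -> T 0 = 0.
Proof.
by move=> hT; apply: dbl0; have := hT 1 0 0; rewrite scaler0 addr0 scale1r.
Qed.
Lemma linD (T : V -> V) : is_linear T -> forall x y, T (x + y) = T x + T y.
Proof. by move=> hT x y; rewrite -[x]scale1r hT !scale1r. Qed.
Lemma linZ (T : V -> V) : is_linear T -> forall a x, T (a *: x) = a *: T x.
Proof. by move=> hT a x; rewrite -[a *: x]addr0 hT lin0 // addr0. Qed.

Lemma mix (T : V -> V) (x y : V) (al be : R) :
  is_linear T -> self_adjoint ip T ->
  complex.Re (ip x (T y)) = 0 ->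
  ip (T ((al%:C)%C *: x + (be%:C)%C *: y)) ((al%:C)%C *: x + (be%:C)%C *: y) =
  ((al ^+ 2)%:C)%C * ip (T x) x + ((be ^+ 2)%:C)%C * ip (T y) y.
Proof.
move=> hT hS hre.
rewrite (linD _ hT) !(linZ _ hT) !ipDl !ipZl !ipDr !ipZr !conjc_real.
rewrite (hS x y) (ipC x (T y)).
have hg : ip x (T y) + (ip x (T y))^*%C = 0 by rewrite addcJ hre mulr0.
move: hg; move: (ip x (T y)) ((ip x (T y))^*%C) => g h /eqP.
rewrite addr_eq0 => /eqP ->.
rewrite !rmorphXn /=; ring.
Qed.


Lemma ker_nz (n p : nat) (M : 'M[R]_(n,p)) : (p < n)%N ->
  exists u : 'rV[R]_n, u != 0 /\ u *m M = 0.
Proof.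
move=> hpn.
have hr : (0 < \rank (kermx M))%N.
  by rewrite mxrank_ker subn_gt0; exact: leq_ltn_trans (rank_leq_col M) hpn.
case: (pickP (fun i => row i (kermx M) != 0)) => [i hi | h]; last first.
  have : kermx M = 0.
    by apply/row_matrixP => i; rewrite row0; apply/eqP; move: (h i) => /negbFE.
  by move=> hK; rewrite hK mxrank0 in hr.
exists (row i (kermx M)); split => //.
by apply/eqP; rewrite -sub_kermx row_sub.
Qed.

Lemma orth_exists k q (e : 'I_k -> V) (w : 'I_q -> V) : (q < k + k)%N ->
  exists c : 'I_k -> R[i], (exists i, c i != 0) /\
    forall j, complex.Re (ip (\sum_i c i *: e i) (w j)) = 0.
Proof.
move=> hq.
pose M : 'M[R]_(k+k, q) := \matrix_(l, j) match split l with
   inl i => complex.Re (ip (e i) (w j)) | inr i => - complex.Im (ip (e i) (w j)) end.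
have [u [hu0 huM]] := @ker_nz _ _ M hq.
have hl (i : 'I_k) : split (lshift k i) = inl i := unsplitK (inl i).
have hr (i : 'I_k) : split (rshift k i) = inr i := unsplitK (inr i).
exists (fun i => (u 0 (lshift k i)) +i* (u 0 (rshift k i)))%C; split.
  case: (pickP (fun l => u 0 l != 0)) => [l hl0|h]; last first.
    exfalso; move/eqP: hu0; apply; apply/rowP => l; rewrite mxE.
    by apply/eqP; move: (h l) => /negbFE.
  rewrite -(splitK l) in hl0; case: (split l) hl0 => i hi; exists i.
    by apply/eqP => /(congr1 (@complex.Re R)) /= h0; rewrite h0 eqxx in hi.
  by apply/eqP => /(congr1 (@complex.Im R)) /= h0; rewrite h0 eqxx in hi.
move=> j; have := congr1 (fun v : 'rV[R]_q => v 0 j) huM; rewrite !mxE big_split_ord /=.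
rewrite ip_suml raddf_sum /= => h; rewrite -[RHS]h -big_split /=; apply: eq_bigr => i _.
rewrite !mxE hl hr.
by case: (ip (e i) (w j)) => a b /=; ring.
Qed.


Lemma ReMC (r : R) (z : R[i]) : complex.Re ((r%:C)%C * z) = r * complex.Re z.
Proof. by case: z => a b /=; ring. Qed.

Lemma normalize (P : V -> V) x : is_linear P -> x != 0 -> P x = x ->
  exists x', [/\ P x' = x', ip x' x' = 1 &
     forall v, complex.Re (ip x v) = 0 -> complex.Re (ip x' v) = 0].
Proof.
move=> hP hx0 hPx.
have hpos := ip_pos x hx0.

set r := (Num.sqrt (complex.Re (ip x x)))^-1.
exists ((r%:C)%C *: x); split.
- by rewrite (linZ _ hP) hPx.
- rewrite ipZl ipZr conjc_real mulrA -rmorphM /= [ip x x]ip_real -rmorphM /=.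
  have -> : r * r * complex.Re (ip x x) = 1.
    rewrite /r -expr2 exprVn sqr_sqrtr ?mulVf //; [exact: lt0r_neq0 | exact: ltW].
  by [].
- by move=> v hv; rewrite ipZl ReMC hv mulr0.
Qed.

Lemma range_eig (P T : V -> V) (l : R[i]) x :
  self_adjoint ip P -> (forall v, P (T (P v)) = l *: P v) -> P x = x ->
  ip (T x) x = l * ip x x.
Proof.
move=> hsa hPT hx.
by rewrite -{2}hx -hsa -{1}hx hPT hx ipZl.
Qed.

Variables (m : nat) (A : 'I_m -> V -> V).
Hypothesis hA : forall j, bounded_op ip (A j) /\ self_adjoint ip (A j).

Definition U (a : 'rV[R]_m) := exists z, ip z z = 1 /\
  forall j, ip (A j z) z = ((a 0 j)%:C)%C.

Lemma Alin j : is_linear (A j).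
Proof. by case: (hA j) => [[]]. Qed.
Lemma Asa j : self_adjoint ip (A j).
Proof. by case: (hA j). Qed.

Lemma Lambda_U k (hk : (0 < k)%N) a : Lambda ip A k a -> U a.
Proof.
move=> [P [[hlin hidem hsa [e [hind hrange]]] hPA]].
pose i0 := Ordinal hk.
pose c : 'I_k -> R[i] := fun i => if i == i0 then 1 else 0.
have hsum : \sum_i c i *: e i = e i0.
  rewrite (bigD1 i0) //= big1 ?addr0 /c ?eqxx ?scale1r //.
  by move=> i /negbTE ->; rewrite scale0r.
have hPx : P (e i0) = e i0.
  have [x0 hx0] : exists x0, P x0 = e i0 by apply/hrange; exists c; rewrite hsum.
  by rewrite -hx0 hidem.
have hx : e i0 != 0.
  apply/eqP => h0; have := hind c; rewrite hsum h0 => /(_ erefl i0).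
  by rewrite /c eqxx => /eqP; rewrite oner_eq0.
have [x' [hPx' hx'1 _]] := @normalize P _ hlin hx hPx.
exists x'; split => // j.
by rewrite (@range_eig P _ _ _ hsa (hPA j) hPx') hx'1 mulr1.
Qed.

Lemma U_Lambda1 a : U a -> Lambda ip A 1 a.
Proof.
move=> [z [hz hzA]].
exists (fun v => ip v z *: z); split; last first.
  move=> j x /=.
  by rewrite (linZ _ (Alin j)) ipZl hzA !scalerA mulrC.
split.
- by move=> a0 x y /=; rewrite ipDZ scalerDl scalerA.
- by move=> x /=; rewrite ipZl hz mulr1.
- move=> x y /=; rewrite ipZl ipZr (ipC y z); exact: mulrC.
exists (fun _ => z); split.
  move=> c; rewrite big_ord1 => h i; rewrite (ord1 i).
  have := congr1 (fun v => ip v z) h; rewrite /= ipZl hz mulr1 ip0l; exact.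
move=> y; split.
  by move=> [x <-]; exists (fun _ => ip x z); rewrite big_ord1.
move=> [c ->]; exists (\sum_(i < 1) c i *: z).
by rewrite big_ord1 ipZl hz mulr1.
Qed.


Lemma base k (hk : (m.+1 < k + k)%N) p (hp : Lambda ip A k p) y (b : 'rV[R]_m)
  (hy : ip y y = 1) (hb : forall j, ip (A j y) y = ((b 0 j)%:C)%C)
  (t : R) (ht0 : 0 <= t) (ht1 : t <= 1) : U ((1 - t) *: p + t *: b).
Proof.
move: hp => [P [[hlin hidem hsa [e [hind hrange]]] hPA]].
pose w : 'I_m.+1 -> V := fun j => if unlift ord_max j is Some j' then A j' y else y.
have [c [[i hci] hc]] := @orth_exists k m.+1 e w hk.
set x := \sum_i c i *: e i in hc.
have hPx : P x = x.
  have [x0 hx0] : exists x0, P x0 = x by apply/hrange; exists c.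
  by rewrite -hx0 hidem.
have hx : x != 0.
  by apply/eqP => h0; move: hci; rewrite (hind c h0 i) eqxx.
have [x' [hPx' hx'1 hre]] := @normalize P x hlin hx hPx.
have hrey : complex.Re (ip x' y) = 0.
  by apply: hre; have := hc ord_max; rewrite /w unlift_none.
have hreA j : complex.Re (ip x' (A j y)) = 0.
  by apply: hre; have := hc (lift ord_max j); rewrite /w liftK.
have h1t : 0 <= 1 - t by rewrite subr_ge0.
exists (((Num.sqrt (1 - t))%:C)%C *: x' + ((Num.sqrt t)%:C)%C *: y); split.
  have hid : is_linear (@id V) by [].
  have hsid : self_adjoint ip (@id V) by [].
  rewrite (mix _ _ _ _ _ hid hsid hrey) /= hx'1 hy !mulr1 !sqr_sqrtr //.
  by rewrite -rmorphD /= subrK.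
move=> j.
rewrite (mix _ _ _ _ _ (Alin j) (Asa j) (hreA j)).
rewrite (@range_eig P _ _ _ hsa (hPA j) hPx') hx'1 mulr1 hb !mxE.
by rewrite !sqr_sqrtr // -!rmorphM -rmorphD.
Qed.


Lemma Tn k (hk : (m.+1 < k + k)%N) n (w : 'I_n -> R) (ps : 'I_n -> 'rV[R]_m) :
  (forall i, 0 <= w i) -> (forall i, Lambda ip A k (ps i)) ->
  forall y (b : 'rV[R]_m), ip y y = 1 -> (forall j, ip (A j y) y = ((b 0 j)%:C)%C) ->
  forall t : R, 0 <= t -> \sum_i w i + t = 1 -> U (\sum_i w i *: ps i + t *: b).
Proof.
elim: n w ps => [|n IH] w ps hw hps y b hy hb t ht hs.
  rewrite big_ord0 add0r in hs; rewrite big_ord0 add0r hs scale1r.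
  by exists y; split.
rewrite big_ord_recr /= in hs; rewrite big_ord_recr /=.
set s := w ord_max in hs *.
have hs0 : 0 <= s by apply: hw.
have hw' : forall i : 'I_n, 0 <= w (widen_ord (leqnSn n) i) by move=> i; apply: hw.
have hps' : forall i : 'I_n, Lambda ip A k (ps (widen_ord (leqnSn n) i)) by move=> i; apply: hps.
case: (eqVneq (s + t) 0) => hu.
  have [hs00 ht00] : s = 0 /\ t = 0.
    by move/eqP: hu; rewrite paddr_eq0 // => /andP [/eqP -> /eqP ->].
  rewrite hs00 ht00 !scale0r !addr0.
  have := IH _ _ hw' hps' y b hy hb 0 (lexx 0).
  rewrite scale0r !addr0; apply; move: hs; by rewrite hs00 ht00 !addr0.
have hupos : 0 < s + t by rewrite lt_def hu addr_ge0.
set u := s + t in hu hupos.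
pose t' := t / u.
have ht'0 : 0 <= t' by rewrite divr_ge0 // ltW.
have ht'1 : t' <= 1 by rewrite ler_pdivrMr // mul1r lerDr.
have [z [hz hzA]] := @base k hk _ (hps ord_max) _ _ hy hb _ ht'0 ht'1.
have := IH _ _ hw' hps' z _ hz hzA u (ltW hupos).
rewrite /u addrA => /(_ hs).
have -> : (s + t) *: ((1 - t') *: ps ord_max + t' *: b) = s *: ps ord_max + t *: b.
  rewrite scalerDr !scalerA mulrBr mulr1 /t' mulrCA divff // mulr1 addrK.
  by [].
by rewrite addrA.
Qed.

End Aux.


Theorem theorem3p6 (R : realType) (V : lmodType R[i]) (ip : V -> V -> R[i])
  (hH : hilbert_space ip) (m : nat) (A : 'I_m -> V -> V)
  (hA : forall j, bounded_op ip (A j) /\ self_adjoint ip (A j))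
  (khat : nat) (hk : (m + 1 < 2 * khat)%N)
  (hne : exists a, Lambda ip A khat a) :
  [/\ star_shaped (Lambda ip A 1),
      (forall a, conv (Lambda ip A khat) a -> Lambda ip A 1 a) &
      forall c, conv (Lambda ip A khat) c -> star_center (Lambda ip A 1) c].
Proof.
have hip : inner_product ip by case: hH.
have hk' : (m.+1 < khat + khat)%N by lia.
have hk0 : (0 < khat)%N by lia.
have hk1 : (0 < 1)%N by [].
case: hne => p0 hp0.
have [y0 [hy0 hb0]] := @Lambda_U _ _ _ hip _ _ _ hk0 _ hp0.
have center : forall c, conv (Lambda ip A khat) c -> star_center (Lambda ip A 1) c.
  move=> c [n [w [ps [hw hw1 hps ->]]]]; split.
    apply: (@U_Lambda1 _ _ _ hip _ _ hA).
    have := @Tn _ _ _ hip _ _ hA _ hk' _ _ _ hw hps _ _ hy0 hb0 _ (lexx 0).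
    by rewrite scale0r !addr0 hw1 => /(_ erefl).
  move=> b hbL t /andP [ht0 ht1].
  have [z [hz hzA]] := @Lambda_U _ _ _ hip _ _ _ hk1 _ hbL.
  apply: (@U_Lambda1 _ _ _ hip _ _ hA).
  have hw' : forall i, 0 <= (1 - t) * w i.
    by move=> i; apply: mulr_ge0; [rewrite subr_ge0 | exact: hw].
  have := @Tn _ _ _ hip _ _ hA _ hk' _ _ _ hw' hps _ _ hz hzA _ ht0.
  rewrite -mulr_sumr hw1 mulr1 subrK => /(_ erefl).
  by rewrite scaler_sumr; under [in X in _ -> X]eq_bigr do rewrite scalerA.
split.
- exists p0; apply: center.
  exists 1%N, (fun _ => 1), (fun _ => p0); split => //.
    by rewrite big_ord1.
  by rewrite big_ord1 scale1r.
- by move=> a /center [].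
- exact: center.
Qed.
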